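(* The region $\Phi_{B_b}$ is contiguous along both the $p_1$ and $p_2$ dimensions; $\Phi_{B_1}$ is contiguous along the $p_1$ dimension; and $\Phi_{B_2}$ is contiguous along the $p_2$ dimension.
   Context: Fix parameters $0\le\lambda_0\le\lambda_1\le 1$, a discount factor $\beta\in[0,1)$, and rates $0<R_l<R_h<2R_l$. Let $\alpha=\lambda_1-\lambda_0$ and $T(p)=\alpha p+\lambda_0$. The model consists of two independent, identical Gilbert–Elliott channels with $\Pr[\text{good}\mid\text{good}]=\lambda_1$ and $\Pr[\text{good}\mid\text{bad}]=\lambda_0$. The belief state is $(p_1,p_2)\in[0,1]^2$, and there are three actions, $B_b$, $B_1$ and $B_2$. Let $V:[0,1]^2\to\mathbb R$ be the optimal expected total discounted reward, i.e. the unique bounded function satisfying $V=\max\{V_{B_b},V_{B_1},V_{B_2}\}$, where $V_{B_b}(p_1,p_2)=p_1R_l+p_2R_l+\beta[(1-p_1)(1-p_2)V(\lambda_0,\lambda_0)+p_1(1-p_2)V(\lambda_1,\lambda_0)+(1-p_1)p_2V(\lambda_0,\lambda_1)+p_1p_2V(\lambda_1,\lambda_1)]$, $V_{B_1}(p_1,p_2)=p_1R_h+\beta[(1-p_1)V(\lambda_0,T(p_2))+p_1V(\lambda_1,T(p_2))]$, $V_{B_2}(p_1,p_2)=p_2R_h+\beta[(1-p_2)V(T(p_1),\lambda_0)+p_2V(T(p_1),\lambda_1)]$. For $a\in\{B_b,B_1,B_2\}$, the decision region is $\Phi_a=\{(p_1,p_2)\in[0,1]^2: V(p_1,p_2)=V_a(p_1,p_2)\}$.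 A set $\Phi$ is contiguous along the $p_1$ dimension if $(x_1,p_2)\in\Phi$ and $(x_2,p_2)\in\Phi$ imply $(x,p_2)\in\Phi$ for all $x\in[x_1,x_2]$. Contiguity along the $p_2$ dimension is defined analogously. *)

(* Defs.v *)
From Stdlib Require Import Reals Lra.
Open Scope R_scope.

(* Belief update of an unobserved channel: T(p) = alpha p + lambda0, alpha = lambda1 - lambda0. *)
Definition Tupd (l0 l1 p : R) : R := (l1 - l0) * p + l0.

Definition in01 (x : R) : Prop := 0 <= x <= 1.

Definition V_Bb (l0 l1 beta Rl : R) (V : R -> R -> R) (p1 p2 : R) : R :=
  p1 * Rl + p2 * Rl
  + beta * ((1 - p1) * (1 - p2) * V l0 l0 + p1 * (1 - p2) * V l1 l0
            + (1 - p1) * p2 * V l0 l1 + p1 * p2 * V l1 l1).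

Definition V_B1 (l0 l1 beta Rh : R) (V : R -> R -> R) (p1 p2 : R) : R :=
  p1 * Rh + beta * ((1 - p1) * V l0 (Tupd l0 l1 p2) + p1 * V l1 (Tupd l0 l1 p2)).

Definition V_B2 (l0 l1 beta Rh : R) (V : R -> R -> R) (p1 p2 : R) : R :=
  p2 * Rh + beta * ((1 - p2) * V (Tupd l0 l1 p1) l0 + p2 * V (Tupd l0 l1 p1) l1).

Definition bounded_on_sq (V : R -> R -> R) : Prop :=
  exists M : R, forall p1 p2, in01 p1 -> in01 p2 -> Rabs (V p1 p2) <= M.

Definition bellman (l0 l1 beta Rl Rh : R) (V : R -> R -> R) : Prop :=
  forall p1 p2, in01 p1 -> in01 p2 ->
    V p1 p2 = Rmax (V_Bb l0 l1 beta Rl V p1 p2)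
                   (Rmax (V_B1 l0 l1 beta Rh V p1 p2) (V_B2 l0 l1 beta Rh V p1 p2)).

Definition region (V Va : R -> R -> R) (p1 p2 : R) : Prop :=
  in01 p1 /\ in01 p2 /\ V p1 p2 = Va p1 p2.

Definition contiguous_p1 (Phi : R -> R -> Prop) : Prop :=
  forall x1 x2 p2 x, Phi x1 p2 -> Phi x2 p2 -> x1 <= x <= x2 -> Phi x p2.

Definition contiguous_p2 (Phi : R -> R -> Prop) : Prop :=
  forall p1 y1 y2 y, Phi p1 y1 -> Phi p1 y2 -> y1 <= y <= y2 -> Phi p1 y.

(* Main.v *)
Require Import Defs.
From Stdlib Require Import Reals Lra.
Open Scope R_scope.

Definition Pdef (V : R -> R -> R) (K : R) : Prop :=
  forall p2 x1 x x2, in01 p2 -> in01 x1 -> in01 x2 -> x1 <= x <= x2 ->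
    (x2 - x1) * V x p2 <= (x2 - x) * V x1 p2 + (x - x1) * V x2 p2 + K * (x2 - x1).

Lemma rmax3_cases (v a b c : R) : v = Rmax a (Rmax b c) -> v = a \/ v = b \/ v = c.
Proof. unfold Rmax; destruct (Rle_dec b c); destruct (Rle_dec a _); intuition. Qed.

Lemma rmax3_ge (a b c : R) : a <= Rmax a (Rmax b c) /\ b <= Rmax a (Rmax b c) /\ c <= Rmax a (Rmax b c).
Proof.
  pose proof (Rmax_l a (Rmax b c)); pose proof (Rmax_r a (Rmax b c));
  pose proof (Rmax_l b c); pose proof (Rmax_r b c); lra.
Qed.

Lemma T01 l0 l1 p : 0 <= l0 -> l0 <= l1 -> l1 <= 1 -> in01 p -> in01 (Tupd l0 l1 p).
Proof. unfold in01, Tupd; intros; split; nra. Qed.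

Lemma absb v M : Rabs v <= M -> -M <= v <= M.
Proof. intros; pose proof (Rle_abs v); pose proof (Rle_abs (-v)); rewrite Rabs_Ropp in *; lra. Qed.

Section S.
Variables (l0 l1 beta Rl Rh : R) (V : R -> R -> R).
Hypotheses (h0 : 0 <= l0) (h01 : l0 <= l1) (h1 : l1 <= 1) (hb0 : 0 <= beta) (hb1 : beta < 1).
Hypothesis hbell : bellman l0 l1 beta Rl Rh V.

Lemma V_ge p1 p2 : in01 p1 -> in01 p2 ->
  V_Bb l0 l1 beta Rl V p1 p2 <= V p1 p2 /\ V_B1 l0 l1 beta Rh V p1 p2 <= V p1 p2 /\
  V_B2 l0 l1 beta Rh V p1 p2 <= V p1 p2.
Proof. intros. rewrite (hbell p1 p2) by auto. apply rmax3_ge. Qed.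

Lemma Tstep K q : Pdef V K -> 0 <= K -> in01 q -> forall x1 x x2, in01 x1 -> in01 x2 -> x1 <= x <= x2 ->
  (x2 - x1) * V (Tupd l0 l1 x) q <= (x2 - x) * V (Tupd l0 l1 x1) q + (x - x1) * V (Tupd l0 l1 x2) q + K * (x2 - x1).
Proof.
  intros HP HK Hq x1 x x2 H1 H2 Hx.
  destruct (Req_dec l1 l0) as [E|E].
  - unfold Tupd; rewrite E. replace ((l0 - l0) * x + l0) with l0 by ring.
    replace ((l0 - l0) * x1 + l0) with l0 by ring. replace ((l0 - l0) * x2 + l0) with l0 by ring.
    nra.
  - assert (Ha : 0 < l1 - l0) by lra.
    assert (HT : Tupd l0 l1 x1 <= Tupd l0 l1 x <= Tupd l0 l1 x2) by (unfold Tupd; split; nra).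
    pose proof (HP q _ _ _ Hq (T01 _ _ _ h0 h01 h1 H1) (T01 _ _ _ h0 h01 h1 H2) HT) as HH.
    unfold Tupd in HH |- *.
    apply (Rmult_le_reg_l (l1 - l0)); [exact Ha|]. nra.
Qed.

Lemma step K : 0 <= K -> Pdef V K -> Pdef V (beta * K).
Proof.
  intros HK HP p2 x1 x x2 Hp H1 H2 Hx.
  assert (Hxin : in01 x) by (unfold in01 in *; lra).
  destruct (V_ge x1 p2 H1 Hp) as [a1 [b1 c1]].
  destruct (V_ge x2 p2 H2 Hp) as [a2 [b2 c2]].
  assert (Hd : 0 <= x2 - x1) by lra.
  assert (0 <= beta * K * (x2 - x1)) by (apply Rmult_le_pos; [apply Rmult_le_pos|]; lra).
  destruct (rmax3_cases _ _ _ _ (hbell x p2 Hxin Hp)) as [E|[E|E]]; rewrite E.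
  - unfold V_Bb in *.
    assert (Hid : (x2 - x1) * (x * Rl + p2 * Rl + beta * ((1 - x) * (1 - p2) * V l0 l0 + x * (1 - p2) * V l1 l0 + (1 - x) * p2 * V l0 l1 + x * p2 * V l1 l1))
      = (x2 - x) * (x1 * Rl + p2 * Rl + beta * ((1 - x1) * (1 - p2) * V l0 l0 + x1 * (1 - p2) * V l1 l0 + (1 - x1) * p2 * V l0 l1 + x1 * p2 * V l1 l1))
      + (x - x1) * (x2 * Rl + p2 * Rl + beta * ((1 - x2) * (1 - p2) * V l0 l0 + x2 * (1 - p2) * V l1 l0 + (1 - x2) * p2 * V l0 l1 + x2 * p2 * V l1 l1))) by ring.
    rewrite Hid. assert (0 <= x2 - x) by lra. assert (0 <= x - x1) by lra. nra.
  - unfold V_B1 in *.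
    set (A := V l0 (Tupd l0 l1 p2)) in *. set (B := V l1 (Tupd l0 l1 p2)) in *.
    assert (Hid : (x2 - x1) * (x * Rh + beta * ((1 - x) * A + x * B))
      = (x2 - x) * (x1 * Rh + beta * ((1 - x1) * A + x1 * B)) + (x - x1) * (x2 * Rh + beta * ((1 - x2) * A + x2 * B))) by ring.
    rewrite Hid. assert (0 <= x2 - x) by lra. assert (0 <= x - x1) by lra. nra.
  - unfold V_B2 in *.
    assert (Hq0 : in01 l0) by (unfold in01; lra). assert (Hq1 : in01 l1) by (unfold in01; lra).
    pose proof (Tstep K l0 HP HK Hq0 x1 x x2 H1 H2 Hx) as T0.
    pose proof (Tstep K l1 HP HK Hq1 x1 x x2 H1 H2 Hx) as T1.
    assert (0 <= x2 - x) by lra. assert (0 <= x - x1) by lra.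
    destruct Hp as [Hp0 Hp1].
    assert (0 <= beta * (1 - p2)) by nra. assert (0 <= beta * p2) by nra.
    assert (Hc : (x2 - x1) * (p2 * Rh + beta * ((1 - p2) * V (Tupd l0 l1 x) l0 + p2 * V (Tupd l0 l1 x) l1))
      <= (x2 - x) * (p2 * Rh + beta * ((1 - p2) * V (Tupd l0 l1 x1) l0 + p2 * V (Tupd l0 l1 x1) l1))
       + (x - x1) * (p2 * Rh + beta * ((1 - p2) * V (Tupd l0 l1 x2) l0 + p2 * V (Tupd l0 l1 x2) l1))
       + beta * K * (x2 - x1)).
    { pose proof (Rmult_le_compat_l _ _ _ H3 T0). pose proof (Rmult_le_compat_l _ _ _ H4 T1). nra. }
    nra.
Qed.

Lemma convex1 : bounded_on_sq V ->
  forall p2 x1 x x2, in01 p2 -> in01 x1 -> in01 x2 -> x1 <= x <= x2 ->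
    (x2 - x1) * V x p2 <= (x2 - x) * V x1 p2 + (x - x1) * V x2 p2.
Proof.
  intros [M HM] p2 x1 x x2 Hp H1 H2 Hx.
  assert (Hxin : in01 x) by (unfold in01 in *; lra).
  assert (HM0 : 0 <= M) by (pose proof (HM p2 p2 Hp Hp); pose proof (Rabs_pos (V p2 p2)); lra).
  assert (base : Pdef V (2 * M)).
  { intros q y1 y y2 Hq G1 G2 Hy.
    assert (in01 y) by (unfold in01 in *; lra).
    pose proof (HM y q H Hq). pose proof (HM y1 q G1 Hq). pose proof (HM y2 q G2 Hq).
    apply absb in H0. apply absb in H3. apply absb in H4. nra. }
  assert (all : forall n, Pdef V (beta ^ n * (2 * M))).
  { induction n. simpl. rewrite Rmult_1_l. exact base.
    simpl. rewrite Rmult_assoc. apply step; [|exact IHn].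
    apply Rmult_le_pos; [apply pow_le|]; lra. }
  set (d := (x2 - x1) * V x p2 - ((x2 - x) * V x1 p2 + (x - x1) * V x2 p2)).
  destruct (Rle_dec d 0) as [Hd|Hd]; [unfold d in Hd; lra|].
  exfalso. apply Rnot_le_lt in Hd.
  assert (Hpos : 0 < x2 - x1).
  { destruct (Req_dec x1 x2) as [E|E]; [|lra]. subst x2. unfold d in Hd.
    assert (x = x1) by lra. subst x. lra. }
  assert (HC : 0 < (2 * M + 1) * (x2 - x1)) by (apply Rmult_lt_0_compat; lra).
  destruct (pow_lt_1_zero beta ltac:(rewrite Rabs_right; lra) (d / ((2 * M + 1) * (x2 - x1)))
     ltac:(apply Rdiv_lt_0_compat; lra)) as [N HN].
  specialize (HN N (le_n N)). rewrite Rabs_right in HN by (apply Rle_ge, pow_le; lra).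
  pose proof (all N p2 x1 x x2 Hp H1 H2 Hx) as HA.
  assert (HB : beta ^ N * ((2 * M + 1) * (x2 - x1)) < d).
  { apply (Rmult_lt_compat_r ((2 * M + 1) * (x2 - x1))) in HN; [|exact HC].
    unfold Rdiv in HN. rewrite Rmult_assoc, Rinv_l in HN by lra. lra. }
  pose proof (pow_le beta N hb0). unfold d in HB. nra.
Qed.

Lemma contig1 (Va : R -> R -> R) :
  bounded_on_sq V ->
  (forall p1 p2, in01 p1 -> in01 p2 -> Va p1 p2 <= V p1 p2) ->
  (forall p2 x1 x x2, (x2 - x1) * Va x p2 = (x2 - x) * Va x1 p2 + (x - x1) * Va x2 p2) ->
  contiguous_p1 (region V Va).
Proof.
  intros HB Hge Haff x1 x2 p2 x [H1 [Hp E1]] [H2 [_ E2]] Hx.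
  assert (Hxin : in01 x) by (unfold in01 in *; lra).
  split; [exact Hxin|split; [exact Hp|]].
  pose proof (convex1 HB p2 x1 x x2 Hp H1 H2 Hx) as C.
  pose proof (Hge x p2 Hxin Hp). pose proof (Haff p2 x1 x x2).
  rewrite E1, E2 in C.
  destruct (Req_dec x1 x2) as [E|E].
  - subst x2. assert (x = x1) by lra. subst x. exact E1.
  - assert (0 < x2 - x1) by lra.
    apply Rle_antisym; [|lra].
    apply (Rmult_le_reg_l (x2 - x1)); lra.
Qed.

End S.

Theorem theorem1 (l0 l1 beta Rl Rh : R) (V : R -> R -> R) :
  0 <= l0 -> l0 <= l1 -> l1 <= 1 ->
  0 <= beta -> beta < 1 ->
  0 < Rl -> Rl < Rh -> Rh < 2 * Rl ->
  bounded_on_sq V ->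
  bellman l0 l1 beta Rl Rh V ->
  contiguous_p1 (region V (V_Bb l0 l1 beta Rl V)) /\
  contiguous_p2 (region V (V_Bb l0 l1 beta Rl V)) /\
  contiguous_p1 (region V (V_B1 l0 l1 beta Rh V)) /\
  contiguous_p2 (region V (V_B2 l0 l1 beta Rh V)).
Proof.
  intros h0 h01 h1 hb0 hb1 _ _ _ HB Hbell.
  set (W := fun a b => V b a).
  assert (HBW : bounded_on_sq W).
  { destruct HB as [M HM]. exists M. intros; apply HM; auto. }
  assert (HbW : bellman l0 l1 beta Rl Rh W).
  { intros p1 p2 H1 H2. unfold W. rewrite (Hbell p2 p1 H2 H1).
    replace (V_Bb l0 l1 beta Rl V p2 p1) with (V_Bb l0 l1 beta Rl W p1 p2)
      by (unfold V_Bb, W; ring).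
    change (V_B1 l0 l1 beta Rh V p2 p1) with (V_B2 l0 l1 beta Rh W p1 p2).
    change (V_B2 l0 l1 beta Rh V p2 p1) with (V_B1 l0 l1 beta Rh W p1 p2).
    f_equal. apply Rmax_comm. }
  assert (affBb : forall U, forall p2 x1 x x2, (x2 - x1) * V_Bb l0 l1 beta Rl U x p2 =
     (x2 - x) * V_Bb l0 l1 beta Rl U x1 p2 + (x - x1) * V_Bb l0 l1 beta Rl U x2 p2)
    by (intros; unfold V_Bb; ring).
  assert (affB1 : forall U, forall p2 x1 x x2, (x2 - x1) * V_B1 l0 l1 beta Rh U x p2 =
     (x2 - x) * V_B1 l0 l1 beta Rh U x1 p2 + (x - x1) * V_B1 l0 l1 beta Rh U x2 p2)
    by (intros; unfold V_B1; ring).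
  pose proof (contig1 l0 l1 beta Rl Rh V h0 h01 h1 hb0 hb1 Hbell _ HB
    (fun p1 p2 H1 H2 => proj1 (V_ge l0 l1 beta Rl Rh V Hbell p1 p2 H1 H2)) (affBb V)) as C1.
  pose proof (contig1 l0 l1 beta Rl Rh V h0 h01 h1 hb0 hb1 Hbell _ HB
    (fun p1 p2 H1 H2 => proj1 (proj2 (V_ge l0 l1 beta Rl Rh V Hbell p1 p2 H1 H2))) (affB1 V)) as C2.
  pose proof (contig1 l0 l1 beta Rl Rh W h0 h01 h1 hb0 hb1 HbW _ HBW
    (fun p1 p2 H1 H2 => proj1 (V_ge l0 l1 beta Rl Rh W HbW p1 p2 H1 H2)) (affBb W)) as C3.
  pose proof (contig1 l0 l1 beta Rl Rh W h0 h01 h1 hb0 hb1 HbW _ HBW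
    (fun p1 p2 H1 H2 => proj1 (proj2 (V_ge l0 l1 beta Rl Rh W HbW p1 p2 H1 H2))) (affB1 W)) as C4.
  split; [exact C1|split; [|split; [exact C2|]]].
  - intros p1 y1 y2 y [A1 [A2 A3]] [B1 [B2 B3]] Hy.
    assert (R1 : region W (V_Bb l0 l1 beta Rl W) y1 p1).
    { split; [exact A2|split; [exact A1|]]. unfold W; rewrite A3; unfold V_Bb; ring. }
    assert (R2 : region W (V_Bb l0 l1 beta Rl W) y2 p1).
    { split; [exact B2|split; [exact B1|]]. unfold W; rewrite B3; unfold V_Bb; ring. }
    destruct (C3 y1 y2 p1 y R1 R2 Hy) as [D1 [D2 D3]].
    split; [exact D2|split; [exact D1|]]. unfold W in D3; rewrite D3; unfold V_Bb; ring.
  - intros p1 y1 y2 y [A1 [A2 A3]] [B1 [B2 B3]] Hy.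
    destruct (C4 y1 y2 p1 y (conj A2 (conj A1 A3)) (conj B2 (conj B1 B3)) Hy) as [D1 [D2 D3]].
    split; [exact D2|split; [exact D1|exact D3]].
Qed.
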